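(* Let $\Gamma\subset\mathbb{Z}^2$ be a finite convex domain. Let $\mathcal{H}_G^\Gamma=\{H\in\mathcal{H}_\mathbb{Q}^\Gamma : (\Delta_\Gamma H)|_{\partial\Gamma}\in\mathbb{Z}^{\partial\Gamma}\}/\mathcal{H}_\mathbb{Z}^\Gamma$. Then the map $H\mapsto[-\Delta_\Gamma H]$ is a well-defined group isomorphism $\mathcal{H}_G^\Gamma\cong G_\Gamma$. Equivalently, the sequence $$0\to G_\Gamma\to \mathcal{H}_\mathbb{Q}^\Gamma/\mathcal{H}_\mathbb{Z}^\Gamma\to(\mathbb{Q}/\mathbb{Z})^{\partial\Gamma}\to 0,$$ where the first map is the inverse of this isomorphism followed by the inclusion, and the second map sends $H$ to $(\Delta_\Gamma H)|_{\partial\Gamma}$ modulo $\mathbb{Z}^{\partial\Gamma}$, is exact.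
   Context: A set $\Gamma\subseteq\mathbb{Z}^2$ is a convex domain if $\Gamma=P\cap\mathbb{Z}^2$ for some convex open set $P\subseteq\mathbb{R}^2$. For finite $\Gamma$, consider the graph with vertices $\Gamma\cup\{s\}$ obtained from the nearest-neighbor graph $\mathbb{Z}^2$ by identifying all vertices outside $\Gamma$ to a sink $s$. The reduced Laplacian is $(\Delta_\Gamma f)(v)=\sum_{w\in\Gamma,\,w\sim v}f(w)-4f(v)$ for $f:\Gamma\to R$, $v\in\Gamma$. The sandpile group is $G_\Gamma=\mathbb{Z}^\Gamma/\Delta_\Gamma(\mathbb{Z}^\Gamma)$, with $[\cdot]$ the projection. The boundary $\partial\Gamma$ is the set of vertices of $\Gamma$ adjacent (in $\mathbb{Z}^2$) to some vertex outside $\Gamma$, and $\Gamma\setminus\partial\Gamma$ is the interior. For $R\in\{\mathbb{Z},\mathbb{Q},\mathbb{R}\}$, $\mathcal{H}_R^\Gamma$ is the module of functions $H:\Gamma\to R$ that are harmonic on $\Gamma$, i.e. $(\Delta_\Gamma H)(v)=0$ for all $v\in\Gamma\setminus\partial\Gamma$. *)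

(* Defs.v *)
From HB Require Import structures.
From mathcomp Require Import all_boot all_order all_algebra.
From mathcomp Require Import finmap.
From Stdlib Require Import Reals.
Set Implicit Arguments. Unset Strict Implicit. Unset Printing Implicit Defensive.
Import Order.TTheory GRing.Theory Num.Theory.

Definition pt := (int * int)%type.

Definition int2R (z : int) : R :=
  match z with Posz n => INR n | Negz n => (- INR (S n))%R end.

Definition convex2 (P : R -> R -> Prop) : Prop :=
  forall x1 y1 x2 y2 t, P x1 y1 -> P x2 y2 -> (0 <= t <= 1)%R ->
    P (t * x1 + (1 - t) * x2)%R (t * y1 + (1 - t) * y2)%R.
Definition open2 (P : R -> R -> Prop) : Prop :=
  forall x y, P x y -> exists e : R, (0 < e)%R /\
    forall x' y', ((x' - x) ^ 2 + (y' - y) ^ 2 < e ^ 2)%R -> P x' y'.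

Definition convex_domain (G : {fset pt}) : Prop :=
  exists P : R -> R -> Prop, convex2 P /\ open2 P /\
    forall z : pt, z \in G <-> P (int2R z.1) (int2R z.2).

Local Open Scope ring_scope.

Definition nbrs (v : pt) : seq pt :=
  [:: (v.1 + 1, v.2); (v.1 - 1, v.2); (v.1, v.2 + 1); (v.1, v.2 - 1)].

(* reduced Laplacian: (Δ_Γ f)(v) = Σ_{w ∈ Γ, w ~ v} f(w) - 4 f(v).
   Functions Γ -> K are represented by functions pt -> K (values off Γ are
   irrelevant). *)
Definition lap (K : pzRingType) (G : {fset pt}) (f : pt -> K) (v : pt) : K :=
  \sum_(w <- nbrs v | w \in G) f w - 4%:R * f v.

Definition boundary (G : {fset pt}) (v : pt) : bool :=
  (v \in G) && has (fun w => w \notin G) (nbrs v).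
Definition interior (G : {fset pt}) (v : pt) : bool :=
  (v \in G) && ~~ boundary G v.

Definition harmonic (K : pzRingType) (G : {fset pt}) (H : pt -> K) : Prop :=
  forall v, interior G v -> lap G H v = 0.

Definition is_intQ (x : rat) : Prop := exists z : int, x = z%:~R.

(* H ∈ H_Z^Γ, viewed inside H_Q^Γ: rational harmonic and integer-valued on Γ *)
Definition int_valued (G : {fset pt}) (H : pt -> rat) : Prop :=
  forall v, v \in G -> is_intQ (H v).

(* the group {H ∈ H_Q^Γ : (Δ_Γ H)|_{∂Γ} ∈ Z^{∂Γ}} (before quotienting by H_Z) *)
Definition HG_pre (G : {fset pt}) (H : pt -> rat) : Prop :=
  harmonic G H /\ forall v, boundary G v -> is_intQ (lap G H v).

(* equality in the sandpile group G_Γ = Z^Γ / Δ_Γ(Z^Γ) *)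
Definition sand_eq (G : {fset pt}) (f g : pt -> int) : Prop :=
  exists h : pt -> int, forall v, v \in G -> f v - g v = lap G h v.

Definition represents (G : {fset pt}) (f : pt -> int) (H : pt -> rat) : Prop :=
  forall v, v \in G -> (f v)%:~R = - lap G H v.

(* Main.v *)
Require Import Defs.
From HB Require Import structures.
From mathcomp Require Import all_boot all_order all_algebra.
From mathcomp Require Import finmap.
From mathcomp Require Import lra zify.
Import Order.TTheory GRing.Theory Num.Theory.
Local Open Scope ring_scope.

Lemma lap_ext (K : pzRingType) (G : {fset pt}) (f1 f2 : pt -> K) v :
  (forall w, w \in G -> f1 w = f2 w) -> v \in G -> lap G f1 v = lap G f2 v.
Proof.
move=> h vG; rewrite /lap (h v vG); congr (_ - _).
by apply: eq_bigr => w wG; apply: h.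
Qed.

Lemma lapD (K : pzRingType) (G : {fset pt}) (f1 f2 : pt -> K) v :
  lap G (fun w => f1 w + f2 w) v = lap G f1 v + lap G f2 v.
Proof. by rewrite /lap big_split /= mulrDr opprD addrACA. Qed.

Lemma lapN (K : pzRingType) (G : {fset pt}) (f : pt -> K) v :
  lap G (fun w => - f w) v = - lap G f v.
Proof. by rewrite /lap sumrN mulrN opprD. Qed.

Lemma lap_int (G : {fset pt}) (h : pt -> int) v :
  lap G (fun w => (h w)%:~R : rat) v = (lap G h v)%:~R.
Proof. by rewrite /lap rmorphB /= rmorph_sum rmorphM /= rmorph_nat. Qed.

Lemma lap_sum (G : {fset pt}) (I : finType) (F : I -> pt -> rat) v :
  lap G (fun w => \sum_i F i w) v = \sum_i lap G (F i) v.
Proof.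
rewrite /lap exchange_big /= sumrB; congr (_ - _); rewrite mulr_sumr.
by [].
Qed.

Lemma memG (G : {fset pt}) (x : pt) : (x \in G) = (x \in (G : seq pt)).
Proof. by []. Qed.

Lemma exists_max (T : eqType) (r : rel T) (s : seq T) x0 :
  total r -> transitive r -> x0 \in s ->
  exists2 m, m \in s & forall y, y \in s -> r y m.
Proof.
move=> tot tr; elim: s x0 => [//|a s IH] x0 _.
case: s IH => [|b s] IH.
  exists a; first exact: mem_head.
  by move=> y; rewrite inE => /eqP ->; case/orP: (tot a a).
have [m ms mM] := IH b (mem_head _ _).
case/orP: (tot a m) => h.
  exists m; first by rewrite inE ms orbT.
  by move=> y; rewrite inE => /orP [/eqP ->|/mM].
exists a; first exact: mem_head.
move=> y; rewrite inE => /orP [/eqP ->|/mM ym]; last exact: tr ym h.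
by case/orP: (tot a a).
Qed.
Lemma maxp (G : {fset pt}) (F : pt -> rat) :
  (forall v, v \in G -> lap G F v = 0) -> forall v, v \in G -> F v <= 0.
Proof.
move=> hl v vG; rewrite leNgt; apply/negP => Fv.
have [m1 m1G m1M] := @exists_max _ (fun a b => F a <= F b) (G : seq pt) v
  (fun a b => le_total _ _) (fun a b c => @le_trans _ _ _ _ _) vG.
set M := F m1 in m1M.
have Mpos : 0 < M by apply: lt_le_trans Fv (m1M v vG).
have m1S : m1 \in [seq w <- (G : seq pt) | F w == M] by rewrite mem_filter eqxx.
have [m mS mM] := @exists_max _ (fun a b : pt => a.1 <= b.1) _ m1
  (fun a b => le_total _ _) (fun a b c => @le_trans _ _ _ _ _) m1S.
move: mS; rewrite mem_filter => /andP [/eqP FmM mG].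
have bnd w : (if w \in G then F w else 0) <= M.
  by case: ifP => [/m1M //|_]; apply: ltW.
have t1 : (if (m.1 + 1, m.2) \in G then F (m.1 + 1, m.2) else 0) < M.
  case: ifP => [wG|_ //]; rewrite lt_neqAle m1M // andbT.
  apply/negP => /eqP e.
  have := mM (m.1 + 1, m.2); rewrite mem_filter e eqxx /= => /(_ wG).
  by lia.
have := hl m mG; rewrite /lap big_mkcond /= !big_cons big_nil addr0 FmM.
move: t1 (bnd (m.1 - 1, m.2)) (bnd (m.1, m.2 + 1)) (bnd (m.1, m.2 - 1)).
set a := (if (m.1 + 1, m.2) \in G then _ else _).
set b := (if (m.1 - 1, m.2) \in G then _ else _).
set c := (if (m.1, m.2 + 1) \in G then _ else _).
set d := (if (m.1, m.2 - 1) \in G then _ else _).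
lra.
Qed.

Lemma maxp0 (G : {fset pt}) (F : pt -> rat) :
  (forall v, v \in G -> lap G F v = 0) -> forall v, v \in G -> F v = 0.
Proof.
move=> hl v vG; apply/le_anti; rewrite (@maxp G F hl v vG) /=.
rewrite -oppr_le0; apply: (@maxp G (fun w => - F w)) => // => // w wG.
by rewrite lapN hl // oppr0.
Qed.
Definition idx (G : {fset pt}) (i : 'I_#|{: G}|) : pt := fsval (enum_val i).
Arguments idx {G} i.
Definition delta (p : pt) : pt -> rat := fun w => (w == p)%:R.
Definition ext (G : {fset pt}) (x : 'rV[rat]_#|{: G}|) : pt -> rat :=
  fun w => \sum_i x 0 i * delta (idx i) w.
Arguments ext {G} x w.
Definition Amat (G : {fset pt}) : 'M[rat]_#|{: G}| :=
  \matrix_(i, j) lap G (delta (idx i)) (idx j).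

Lemma idx_inj G : injective (@idx G).
Proof. by move=> i j /val_inj /enum_val_inj. Qed.

Lemma idx_rank G (w : pt) (wG : w \in G) : idx (enum_rank ([` wG]%fset)) = w.
Proof. by rewrite /idx enum_rankK. Qed.

Lemma ext_idx G x k : @ext G x (idx k) = x 0 k.
Proof.
rewrite /ext (bigD1 k) //= /delta eqxx mulr1 big1 ?addr0 // => i ik.
by rewrite (inj_eq (@idx_inj G)) eq_sym (negbTE ik) mulr0.
Qed.

Lemma mulA G x j : (x *m Amat G) 0 j = lap G (ext x) (idx j).
Proof.
rewrite mxE /ext lap_sum; apply: eq_bigr => i _.
by rewrite mxE /lap mulrBr mulr_sumr mulrCA.
Qed.

Lemma Amat_unit G : Amat G \in unitmx.
Proof.
rewrite unitmxE unitfE; apply/det0P => [[x xn0 xA]].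
move/eqP: xn0; apply; apply/rowP => k; rewrite mxE.
rewrite -ext_idx; apply: (@maxp0 G) => [v vG|]; last by rewrite /idx fsvalP.
by rewrite -(@idx_rank G v vG) -mulA xA mxE.
Qed.

Lemma solve (G : {fset pt}) (t : pt -> rat) :
  exists H : pt -> rat, forall v, v \in G -> lap G H v = t v.
Proof.
pose tv : 'rV[rat]_#|{: G}| := \row_j t (idx j).
exists (ext (tv *m invmx (Amat G))) => v vG.
by rewrite -(@idx_rank G v vG) -mulA mulmxKV ?Amat_unit // mxE.
Qed.
Lemma bound_seq (s : seq pt) : exists X : int, forall v, v \in s -> `|v.1| <= X.
Proof.
elim: s => [|a s [X hX]]; first by exists 0.
exists (Num.max `|a.1| X) => v; rewrite inE => /orP [/eqP ->|/hX h].
  by rewrite le_max lexx.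
by rewrite le_max h orbT.
Qed.

Lemma interior_nbrs G v w : interior G v -> w \in nbrs v -> w \in G.
Proof.
rewrite /interior /boundary => /andP [vG]; rewrite vG andTb => hn wn.
by apply: contraNT hn => wG; apply/hasP; exists w.
Qed.
Arguments interior_nbrs {G v w}.

Lemma lap_zero_int (G : {fset pt}) (h : pt -> int) (a : int) v :
  (forall w, w.1 <= a -> h w = 0) -> v.1 < a -> lap G h v = 0.
Proof.
case: v => x y /= hz va; rewrite /lap big_mkcond /= !big_cons big_nil addr0.
have l1 : x <= a by lia.
have l2 : x + 1 <= a by lia.
have l3 : x - 1 <= a by lia.
rewrite (hz (x, y)) // (hz (x + 1, y)) // (hz (x - 1, y)) // (hz (x, y + 1)) // (hz (x, y - 1)) //.
by rewrite !if_same !addr0.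
Qed.

Lemma push_ind (G : {fset pt}) (X : int) (hX : forall v, v \in G -> v.1 <= X) (n : nat) :
  forall (g : pt -> int) (a : int), X + 1 - a <= n%:Z ->
  (forall v, interior G v -> v.1 < a -> g v = 0) ->
  exists g' h, (forall v, v \in G -> g' v - g v = lap G h v) /\
               (forall v, interior G v -> g' v = 0).
Proof.
elim: n => [|n IH] g a hn hg.
  exists g, (fun _ => 0); split.
    by move=> v vG; rewrite subrr /lap big1 // mulr0 subrr.
  move=> v vi; apply: hg => //.
  move: vi; rewrite /interior => /andP [vG _]; move: (hX v vG) hn.
  case: v {vG} => x y /=; lia.
pose h1 := fun w : pt => if interior G (w.1 - 1, w.2) && (w.1 - 1 == a)
  then - g (w.1 - 1, w.2) else 0.
have h1z w : w.1 <= a -> h1 w = 0.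
  case: w => x y /= wa; rewrite /h1 /=; case: ifP => // /andP [_ /eqP]; lia.
pose g1 := fun v => g v + lap G h1 v.
have hg1 : forall v, interior G v -> v.1 < a + 1 -> g1 v = 0.
  move=> v vi va.
  have [lt|eq] : v.1 < a \/ v.1 = a by move: va; case: v {vi} => x y /=; lia.
    by rewrite /g1 hg // (@lap_zero_int G h1 a v h1z lt) ?addr0.
  have vn1 : (v.1 + 1, v.2) \in G by apply: (interior_nbrs vi); rewrite !inE eqxx.
  case: v vi va eq vn1 => x y /= vi va eq vn1.
  rewrite /g1 /lap big_mkcond /= !big_cons big_nil addr0.
  rewrite vn1 (h1z (x, y)) ?(h1z (x - 1, y)) ?(h1z (x, y + 1)) ?(h1z (x, y - 1)) /=; try lia.
  rewrite !if_same /h1 /=.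
  have e : x + 1 - 1 = x by lia.
  rewrite e vi /= eq eqxx /=; lia.
have hn1 : X + 1 - (a + 1) <= n%:Z by move: hn; lia.
have [g' [h2 [e1 e2]]] := IH g1 (a + 1) hn1 hg1.
exists g', (fun w => h2 w + h1 w); split => // v vG.
by rewrite lapD -e1 /g1; lia.
Qed.
Lemma push (G : {fset pt}) (g : pt -> int) :
  exists g' h, (forall v, v \in G -> g' v - g v = lap G h v) /\
               (forall v, interior G v -> g' v = 0).
Proof.
have [B hB] := bound_seq G.
have hX : forall v, v \in G -> v.1 <= B.
  by move=> v /hB; rewrite ler_norml => /andP [].
have hn : B + 1 - - B <= (absz (B + 1 - - B)%R)%:Z by rewrite abszE ler_norm.
apply: (@push_ind G B hX (absz (B + 1 - - B)%R) g (- B) hn).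
move=> v; rewrite /interior => /andP [vG _] /=.
by move: (hB v vG); rewrite ler_norml => /andP [h1 _]; rewrite ltNge h1.
Qed.

Lemma numqK x : is_intQ x -> (numq x)%:~R = x.
Proof. by case=> z ->; rewrite numq_int. Qed.

Lemma lapHint G H v : HG_pre G H -> v \in G -> is_intQ (lap G H v).
Proof.
case=> hh hb vG; case bv: (boundary G v); first exact: hb.
by exists 0; rewrite hh // /interior vG bv.
Qed.

Theorem lemma1 (G : {fset pt}) (hG : convex_domain G) :
  (* well-defined into Z^Γ: -Δ_Γ H is integer valued on Γ *)
  (forall H, HG_pre G H -> exists f : pt -> int, represents G f H) /\
  (* additive (group homomorphism) *)
  (forall H1 H2 f1 f2, HG_pre G H1 -> HG_pre G H2 ->
     represents G f1 H1 -> represents G f2 H2 ->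
     HG_pre G (fun v => H1 v + H2 v) /\
     represents G (fun v => f1 v + f2 v) (fun v => H1 v + H2 v)) /\
  (* well-defined on the quotient by H_Z^Γ and injective:
     [-Δ H1] = [-Δ H2] in G_Γ  iff  H1 - H2 ∈ H_Z^Γ *)
  (forall H1 H2 f1 f2, HG_pre G H1 -> HG_pre G H2 ->
     represents G f1 H1 -> represents G f2 H2 ->
     (sand_eq G f1 f2 <-> int_valued G (fun v => H1 v - H2 v))) /\
  (* surjective onto G_Γ *)
  (forall g : pt -> int, exists H f,
     HG_pre G H /\ represents G f H /\ sand_eq G f g).
Proof.
split.
  move=> H hH; exists (fun v => numq (- lap G H v)) => v vG.
  have [z ez] := @lapHint G H v hH vG.
  by rewrite numqK // ez; exists (- z); rewrite rmorphN.
split.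
  move=> H1 H2 f1 f2 [h1 b1] [h2 b2] r1 r2; split; last first.
    move=> v vG; rewrite lapD rmorphD /= (r1 v vG) (r2 v vG); lra.
  rewrite /HG_pre; split; first by move=> v vi; rewrite lapD h1 // h2 // addr0.
  move=> v vb; rewrite lapD.
  have [z1 e1] := b1 v vb; have [z2 e2] := b2 v vb.
  by exists (z1 + z2); rewrite e1 e2 rmorphD.
split.
  move=> H1 H2 f1 f2 p1 p2 r1 r2; split.
    case=> h hh v vG.
    pose F := fun w => H1 w - H2 w + (h w)%:~R.
    have F0 := @maxp0 G F.
    have: F v = 0.
      apply: F0 => // w wG.
      rewrite /F lapD lapD lapN lap_int -hh // rmorphB /= (r1 w wG) (r2 w wG).
      by rewrite opprK addrACA addrN addNr addr0.
    rewrite /F => /eqP; rewrite addr_eq0 => /eqP ->.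
    by exists (- h v); rewrite mulrNz.
  move=> hi.
  exists (fun w => - numq (H1 w - H2 w)) => v vG.
  apply: (@intr_inj rat); rewrite -lap_int rmorphB /= (r1 v vG) (r2 v vG).
  have -> : lap G (fun w => ((- numq (H1 w - H2 w))%:~R : rat)) v =
            lap G (fun w => - (H1 w - H2 w)) v.
    apply: lap_ext => // w wG; rewrite mulrNz numqK //; exact: hi w wG.
  rewrite (@lapN _ G (fun w => H1 w - H2 w)) (@lapD _ G H1 (fun w => - H2 w)).
  rewrite (@lapN _ G H2); lra.
move=> g.
have [g' [h [e1 e2]]] := push G g.
have [H eH] := solve G (fun v => - (g' v)%:~R).
exists H, g'; split; last split.
- rewrite /HG_pre; split.
    move=> v vi; rewrite eH; first by rewrite e2 // oppr0.
    by move: vi => /andP [].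
  move=> v vb; rewrite eH; last by move: vb => /andP [].
  by exists (- g' v); rewrite rmorphN.
- by move=> v vG; rewrite eH // opprK.
- by exists h.
Qed.
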